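(* Assume $(H_S(\infty))$ and let $\mathbf a_\lambda,\mathbf n_\lambda,\mathbf m_\lambda$ be as in the context. Let $(N^S_t(i))_{t\ge0,i\in\mathbb{Z}}$ be i.i.d. $SR(\mu_S)$-processes and $a<b$. Then: (i) for $t<1$, $\lim_{\lambda\to0}\Pr[\forall i\in\{\lfloor a\mathbf m_\lambda\rfloor,\dots,\lfloor b\mathbf m_\lambda\rfloor\},\ N^S_{\mathbf a_\lambda t}(i)>0]=0$; (ii) for $t\ge1$, the same probability tends to $1$; (iii) for $t<1$, $\lim_{\lambda\to0}\Pr[\forall i\in\{\lfloor a\mathbf n_\lambda\rfloor,\dots,\lfloor b\mathbf n_\lambda\rfloor\},\ N^S_{\mathbf a_\lambda t}(i)>0]=0$; (iv) for $t>1$, the probability in (iii) tends to $1$; (v) for $t>0$, $\lim_{\lambda\to0}\Pr[\exists i\in\{\lfloor a\mathbf m_\lambda\rfloor,\dots,\lfloor b\mathbf m_\lambda\rfloor\},\ N^S_{\mathbf a_\lambda t}(i)>0]=1$.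
   Context: $(H_S(\infty))$: $\mu_S$ is a probability measure on $(0,\infty)$ with unbounded support and finite mean $m_S$; with $\nu_S(dt)=m_S^{-1}\mu_S((t,\infty))dt$, for all $t>0$, $\lim_{x\to\infty}\nu_S((x,\infty))/\nu_S((tx,\infty))=t^\infty$ ($=0,1,\infty$ according as $t<1,t=1,t>1$). $\mathbf a_\lambda$ is the unique solution of $\lambda\mathbf a_\lambda=\nu_S((\mathbf a_\lambda,\infty))$, $\mathbf n_\lambda=\lfloor1/(\lambda\mathbf a_\lambda)\rfloor$, and $\mathbf m_\lambda:(0,1]\to\mathbb{N}$ is non-increasing with $\mathbf m_\lambda\to\infty$, $\mathbf m_\lambda/\mathbf n_\lambda\to0$, and $\mathbf m_\lambda\nu_S((\mathbf a_\lambda z,\infty))\to\infty$ for every $z\in[0,1)$, as $\lambda\to0$. A $SR(\mu)$-process: $N_t=\#\{k\ge1:T_k\le t\}$ with $T_1\sim\nu_\mu(dt)=m_\mu^{-1}\mu((t,\infty))dt$, $T_{k+1}=T_k+X_k$, $(X_k)$ i.i.d. with law $\mu$ independent of $T_1$. *)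

(* Defs.v *)
From HB Require Import structures.
From mathcomp Require Import all_boot all_order all_algebra.
From mathcomp Require Import all_classical all_reals all_analysis.
Set Implicit Arguments. Unset Strict Implicit. Unset Printing Implicit Defensive.
Import Order.TTheory GRing.Theory Num.Theory.
Import numFieldNormedType.Exports.
Local Open Scope classical_set_scope.
Local Open Scope ring_scope.

Definition mutually_independent d (T : measurableType d) (R : realType)
  (P : probability T R) (I : eqType) (Y : I -> T -> R) : Prop :=
  (forall i, measurable_fun setT (Y i)) /\
  forall (J : seq I) (B : I -> set R), uniq J -> (forall j, measurable (B j)) ->
    P (\bigcap_(j in [set j | j \in J]) (Y j @^-1` B j)) =
    (\prod_(j <- J) P (Y j @^-1` B j))%E.

Definition mean (R : realType) (mu : probability R R) : R :=
  fine (\int[mu]_x (x%:E)).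

Definition nu (R : realType) (mu : probability R R) (A : set R) : \bar R :=
  ((mean mu)^-1)%:E *
  \int[lebesgue_measure]_(t in A `&` `]0%R, +oo[) mu [set x : R | (t < x)%R].

(* k-th arrival time T_{k+1} = T_1 + X_1 + ... + X_k of process i *)
Definition arrival d (T : measurableType d) (R : realType)
  (T1 : int -> T -> R) (X : int -> nat -> T -> R) (i : int) (k : nat) (w : T) : R :=
  T1 i w + \sum_(j < k) X i j w.

Definition Ncount d (T : measurableType d) (R : realType)
  (T1 : int -> T -> R) (X : int -> nat -> T -> R) (i : int) (t : R) (w : T) : \bar R :=
  \esum_(k in [set k : nat | arrival T1 X i k w <= t]) 1%E.

Definition SRfamily d (T : measurableType d) (R : realType)
  (T1 : int -> T -> R) (X : int -> nat -> T -> R) (u : int + (int * nat)) : T -> R :=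
  match u with inl i => T1 i | inr (i, k) => X i k end.

(* Main.v *)
Require Import Defs.
From HB Require Import structures.
From mathcomp Require Import all_boot all_order all_algebra.
From mathcomp Require Import all_classical all_reals all_analysis.
From mathcomp Require Import measurable_realfun.
From mathcomp Require Import lra zify.
Import Order.TTheory GRing.Theory Num.Theory.
Import numFieldNormedType.Exports.
Local Open Scope classical_set_scope.
Local Open Scope ring_scope.


Lemma Ncount_pos d (T : measurableType d) (R : realType)
  (T1 : int -> T -> R) (X : int -> nat -> T -> R) i s w :
  (0 < Ncount T1 X i s w)%E <-> exists k, arrival T1 X i k w <= s.
Proof.
rewrite /Ncount; split.
- move=> H; apply: contrapT => nk.
  move: H; rewrite esum1 ?ltxx// => k /= ks; exfalso; apply: nk; by exists k.
- move=> [k hk]; apply: (@lt_le_trans _ _ 1%E) => //.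
  apply: esum_ge; exists [set k].
    split; first exact: finite_set1.
    by move=> j /= ->.
  by rewrite fsbig_set1.
Qed.


Lemma range_mem (lo i : int) (c : nat) :
  (i \in [seq lo + k%:Z | k <- iota 0 c]) = (lo <= i < lo + c%:Z).
Proof.
apply/mapP/andP.
- move=> [k]; rewrite mem_iota add0n => /andP[_ kc] ->.
  by rewrite lerDl ltrD2l ltz_nat.
- move=> [h1 h2]; exists `|i - lo|%N; last first.
    by rewrite gez0_abs ?subr_ge0// addrCA subrr addr0.
  rewrite mem_iota add0n leq0n /= -ltz_nat gez0_abs ?subr_ge0//.
  by rewrite ltrBlDl.
Qed.

Lemma prob_fin d (Omega : measurableType d) (R : realType)
  (P : probability Omega R) (A : set Omega) : measurable A -> P A \is a fin_num.
Proof.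
move=> mA; rewrite ge0_fin_numE//; apply: (le_lt_trans (probability_le1 P mA)).
exact: ltry.
Qed.

Lemma prob_all d (Omega : measurableType d) (R : realType)
  (P : probability Omega R) (muS : probability R R)
  (T1 : int -> Omega -> R) (X : int -> nat -> Omega -> R)
  (indep : mutually_independent P (SRfamily T1 X))
  (T1_law : forall (i : int) (A : set R), measurable A -> P (T1 i @^-1` A) = nu muS A)
  (lo : int) (c : nat) (B : set R) (mB : measurable B) :
  P [set w | forall i, lo <= i < lo + c%:Z -> B (T1 i w)] =
  ((fine (nu muS B)) ^+ c)%:E.
Proof.
have nuf : nu muS B = (fine (nu muS B))%:E.
  by rewrite -(T1_law 0 B mB) fineK// prob_fin// -[B]setTI; exact: (indep.1 (inl 0)).
case: indep => mY /(_ (map inl [seq lo + k%:Z | k <- iota 0 c]) (fun _ => B)).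
move=> /(_ _ (fun _ => mB)).
have -> : \bigcap_(j in [set j | j \in (map inl [seq lo + k%:Z | k <- iota 0 c])])
   SRfamily T1 X j @^-1` B = [set w | forall i, lo <= i < lo + c%:Z -> B (T1 i w)].
  apply/seteqP; split => w /=.
  - move=> H i hi; apply: (H (inl i)) => /=.
    by rewrite (mem_map (@inl_inj _ _)) range_mem.
  - move=> H [i|[i k]] /=; last by move/mapP => [? _].
    by rewrite (mem_map (@inl_inj _ _)) range_mem => /H.
move=> ->; last first.
  rewrite map_inj_uniq; last exact: inl_inj.
  by rewrite map_inj_uniq ?iota_uniq// => x y /= /addrI [].
rewrite big_map big_map (eq_bigr (fun _ => (fine (nu muS B))%:E)); last first.
  by move=> k _ /=; rewrite T1_law.
by rewrite prodEFin -(subn0 c) -/(index_iota 0 c) prodr_const_nat.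
Qed.


Lemma E_meas d (Omega : measurableType d) (R : realType)
  (P : probability Omega R)
  (T1 : int -> Omega -> R) (X : int -> nat -> Omega -> R)
  (indep : mutually_independent P (SRfamily T1 X)) i s :
  measurable [set w | (0 < Ncount T1 X i s w)%E].
Proof.
have -> : [set w | (0 < Ncount T1 X i s w)%E] =
   \bigcup_k (arrival T1 X i k @^-1` `]-oo, s]).
  apply/seteqP; split => w /=.
  - by move/Ncount_pos => [k hk]; exists k => //=; rewrite in_itv.
  - by move=> [k _]; rewrite /= in_itv /= => hk; apply/Ncount_pos; exists k.
apply: bigcupT_measurable => k; rewrite -[X in measurable X]setTI.
have mf : measurable_fun setT (arrival T1 X i k).
  apply: measurable_funD; first exact: (indep.1 (inl i)).
  by apply: measurable_sum => j; exact: (indep.1 (inr (i, nat_of_ord j))).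
exact: mf.
Qed.


Lemma range_ex (lo i : int) (c : nat) :
  (lo <= i < lo + c%:Z) <-> exists k, (k < c)%N /\ i = lo + k%:Z.
Proof.
rewrite -range_mem; split.
- by move/mapP => [k]; rewrite mem_iota add0n => /andP[_ kc] ->; exists k.
- move=> [k [kc ->]]; apply/mapP; exists k => //.
  by rewrite mem_iota add0n.
Qed.

Lemma Sall_meas d (Omega : measurableType d) (R : realType)
  (P : probability Omega R)
  (T1 : int -> Omega -> R) (X : int -> nat -> Omega -> R)
  (indep : mutually_independent P (SRfamily T1 X)) lo c s :
  measurable [set w | forall i, lo <= i < lo + c%:Z -> (0 < Ncount T1 X i s w)%E].
Proof.
have -> : [set w | forall i, lo <= i < lo + c%:Z -> (0 < Ncount T1 X i s w)%E] =
  \bigcap_(k in [set k : nat | (k < c)%N])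
     [set w | (0 < Ncount T1 X (lo + k%:Z) s w)%E].
  apply/seteqP; split => w /=.
  - by move=> H k /= kc; apply: H; apply/range_ex; exists k.
  - by move=> H i /range_ex [k [kc ->]]; exact: H.
by apply: bigcap_measurableType => k _; exact: (@E_meas _ _ _ _ _ _ indep).
Qed.

Lemma Sex_meas d (Omega : measurableType d) (R : realType)
  (P : probability Omega R)
  (T1 : int -> Omega -> R) (X : int -> nat -> Omega -> R)
  (indep : mutually_independent P (SRfamily T1 X)) lo c s :
  measurable [set w | exists i, lo <= i < lo + c%:Z /\ (0 < Ncount T1 X i s w)%E].
Proof.
have -> : [set w | exists i, lo <= i < lo + c%:Z /\ (0 < Ncount T1 X i s w)%E] =
  \bigcup_(k in [set k : nat | (k < c)%N])
     [set w | (0 < Ncount T1 X (lo + k%:Z) s w)%E].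
  apply/seteqP; split => w /=.
  - by move=> [i [/range_ex [k [kc ->]] H]]; exists k.
  - by move=> [k kc H]; exists (lo + k%:Z); split => //; apply/range_ex; exists k.
by apply: bigcup_measurable => k _; exact: (@E_meas _ _ _ _ _ _ indep).
Qed.

Lemma nu_compl d (Omega : measurableType d) (R : realType)
  (P : probability Omega R) (muS : probability R R)
  (T1 : int -> Omega -> R) (X : int -> nat -> Omega -> R)
  (indep : mutually_independent P (SRfamily T1 X))
  (T1_law : forall (i : int) (A : set R), measurable A -> P (T1 i @^-1` A) = nu muS A)
  (s : R) :
  fine (nu muS `]-oo, s]) = 1 - fine (nu muS `]s, +oo[).
Proof.
rewrite -!(T1_law 0) //.
have -> : T1 0 @^-1` `]-oo, s] = ~` (T1 0 @^-1` `]s, +oo[).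
  apply/seteqP; split => w /=; rewrite !in_itv /= ?andbT.
  - by move=> h1 h2; move: h1; rewrite leNgt h2.
  - by move/negP; rewrite -leNgt.
rewrite probability_setC; last by rewrite -[X in measurable X]setTI; exact: (indep.1 (inl 0)).
have := @prob_fin _ _ _ P _ (_ : measurable (T1 0 @^-1` `]s, +oo[)).
rewrite -[X in measurable X]setTI => /(_ ((indep.1 (inl 0)) measurableT _ (measurable_itv _))).
by move=> /fineK <-; rewrite -EFinB.
Qed.


Lemma low_all d (Omega : measurableType d) (R : realType)
  (P : probability Omega R) (muS : probability R R)
  (T1 : int -> Omega -> R) (X : int -> nat -> Omega -> R)
  (indep : mutually_independent P (SRfamily T1 X))
  (T1_law : forall (i : int) (A : set R), measurable A -> P (T1 i @^-1` A) = nu muS A)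
  (lo : int) (c : nat) (s : R) :
  (((1 - fine (nu muS `]s, +oo[)) ^+ c)%:E <=
   P [set w | forall i, (lo <= i < lo + c%:Z)%R -> (0 < Ncount T1 X i s w)%E])%E.
Proof.
rewrite -(@nu_compl _ _ _ P _ _ _ indep T1_law).
rewrite -(@prob_all _ _ _ P _ _ _ indep T1_law lo c)//.
apply: le_measure; rewrite ?inE.
- rewrite [X in measurable X](_ : _ = \bigcap_(k in [set k : nat | (k < c)%N])
     (T1 (lo + k%:Z) @^-1` `]-oo, s])); last first.
    apply/seteqP; split => w /=.
    - by move=> H k kc; apply: H; apply/range_ex; exists k.
    - by move=> H i /range_ex [k [kc ->]]; exact: H.
  apply: bigcap_measurableType => i _; rewrite -[X in measurable X]setTI.
  exact: (indep.1 (inl (lo + i%:Z))) measurableT _ (measurable_itv _).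
- exact: (@Sall_meas _ _ _ _ _ _ indep).
- move=> w /= H i /H; rewrite in_itv /= => hi.
  apply/Ncount_pos; exists 0%N; rewrite /arrival big_ord0 addr0 //.
Qed.


Lemma Tall_meas d (Omega : measurableType d) (R : realType)
  (P : probability Omega R)
  (T1 : int -> Omega -> R) (X : int -> nat -> Omega -> R)
  (indep : mutually_independent P (SRfamily T1 X)) lo c (B : set R) :
  measurable B -> measurable [set w | forall i, lo <= i < lo + c%:Z -> B (T1 i w)].
Proof.
move=> mB.
rewrite [X in measurable X](_ : _ = \bigcap_(k in [set k : nat | (k < c)%N])
     (T1 (lo + k%:Z) @^-1` B)); last first.
  apply/seteqP; split => w /=.
  - by move=> H k kc; apply: H; apply/range_ex; exists k.
  - by move=> H i /range_ex [k [kc ->]]; exact: H.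
apply: bigcap_measurableType => i _; rewrite -[X in measurable X]setTI.
exact: (indep.1 (inl (lo + i%:Z))) measurableT _ mB.
Qed.

Lemma low_ex d (Omega : measurableType d) (R : realType)
  (P : probability Omega R) (muS : probability R R)
  (T1 : int -> Omega -> R) (X : int -> nat -> Omega -> R)
  (indep : mutually_independent P (SRfamily T1 X))
  (T1_law : forall (i : int) (A : set R), measurable A -> P (T1 i @^-1` A) = nu muS A)
  (lo : int) (c : nat) (s : R) :
  ((1 - (fine (nu muS `]s, +oo[)) ^+ c)%:E <=
   P [set w | exists i, (lo <= i < lo + c%:Z)%R /\ (0 < Ncount T1 X i s w)%E])%E.
Proof.
set S := [set w | exists i, _ /\ _].
have mS : measurable S by exact: (@Sex_meas _ _ _ _ _ _ indep).
have h : (P (~` S) <= ((fine (nu muS `]s, +oo[)) ^+ c)%:E)%E.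
  rewrite -(@prob_all _ _ _ P _ _ _ indep T1_law lo c)//.
  apply: le_measure; rewrite ?inE.
  - exact: measurableC.
  - exact: (@Tall_meas _ _ _ _ _ _ indep).
  - move=> w /= nS i hi; rewrite in_itv /= andbT ltNge; apply/negP => hT.
    apply: nS; exists i; split => //; apply/Ncount_pos; exists 0%N.
    by rewrite /arrival big_ord0 addr0.
have hC := probability_setC P (measurableC mS).
rewrite setCK in hC.
have fin := @prob_fin _ _ _ P _ (measurableC mS).
rewrite hC -(fineK fin) -EFinB lee_fin lerD2l lerN2.
by rewrite -lee_fin fineK.
Qed.


Lemma X_null d (Omega : measurableType d) (R : realType)
  (P : probability Omega R) (muS : probability R R)
  (muS_pos : muS `]0%R, +oo[%classic = 1%E)
  (T1 : int -> Omega -> R) (X : int -> nat -> Omega -> R)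
  (indep : mutually_independent P (SRfamily T1 X))
  (X_law : forall (i : int) (k : nat) (A : set R), measurable A ->
             P (X i k @^-1` A) = muS A) :
  exists A : set Omega, [/\ measurable A, P A = 0%E &
    forall w, ~ A w -> forall i k, 0 < X i k w].
Proof.
pose F (n : nat) : set Omega := if unpickle n is Some (i, k) then
  X i k @^-1` `]-oo, 0] else set0.
have nF : P.-negligible (\bigcup_n F n).
  apply: negligible_bigcup => n; rewrite /F; case: (unpickle n) => [[i k]|];
    last exact: negligible_set0.
  exists (X i k @^-1` `]-oo, 0]); split => //.
    rewrite -[X in measurable X]setTI.
    exact: (indep.1 (inr (i, k))) measurableT _ (measurable_itv _).
  transitivity (muS `]-oo, 0%R]%classic); first exact: X_law.
  have -> : `]-oo, 0%R]%classic = ~` `]0%R, +oo[%classic :> set R.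
    apply/seteqP; split => x /=; rewrite !in_itv /= ?andbT.
    - by move=> h1 h2; move: h1; rewrite leNgt h2.
    - by move/negP; rewrite -leNgt.
  by rewrite probability_setC // muS_pos subee.
case: nF => A [mA PA sA]; exists A; split => // w nA i k.
rewrite ltNge; apply/negP => hX; apply: nA; apply: sA.
exists (pickle (i, k)) => //; rewrite /F pickleK /= in_itv /=.
exact: hX.
Qed.

Lemma up_all d (Omega : measurableType d) (R : realType)
  (P : probability Omega R) (muS : probability R R)
  (muS_pos : muS `]0%R, +oo[%classic = 1%E)
  (T1 : int -> Omega -> R) (X : int -> nat -> Omega -> R)
  (indep : mutually_independent P (SRfamily T1 X))
  (T1_law : forall (i : int) (A : set R), measurable A -> P (T1 i @^-1` A) = nu muS A)
  (X_law : forall (i : int) (k : nat) (A : set R), measurable A ->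
             P (X i k @^-1` A) = muS A)
  (lo : int) (c : nat) (s : R) :
  (P [set w | forall i, (lo <= i < lo + c%:Z)%R -> (0 < Ncount T1 X i s w)%E] <=
   ((1 - fine (nu muS `]s, +oo[)) ^+ c)%:E)%E.
Proof.
have [A [mA PA hA]] := @X_null _ _ _ _ _ muS_pos _ _ indep X_law.
rewrite -(@nu_compl _ _ _ P _ _ _ indep T1_law).
rewrite -(@prob_all _ _ _ P _ _ _ indep T1_law lo c)//.
set T := [set w | forall i, _ -> `]-oo, s]%classic (T1 i w)].
have mT : measurable T by exact: (@Tall_meas _ _ _ _ _ _ indep).
apply: (@le_trans _ _ (P (T `|` A))).
  apply: le_measure; rewrite ?inE.
  - exact: (@Sall_meas _ _ _ _ _ _ indep).
  - exact: measurableU.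
  - move=> w /= H; case: (pselect (A w)) => Aw; [by right|left].
    move=> i /H /Ncount_pos [k]; rewrite /arrival => hk; rewrite /= in_itv /=.
    apply: le_trans hk; rewrite lerDl; apply: sumr_ge0 => j _.
    exact/ltW/hA.
apply: (le_trans (measureU2 P mT mA)).
by rewrite [X in (_ + X <= _)%E](_ : _ = 0%E) ?adde0 //.
Qed.


Lemma bern (R : realFieldType) (x : R) n : -1 <= x -> 1 + n%:R * x <= (1 + x) ^+ n.
Proof.
move=> hx; elim: n => [|n IH]; first by rewrite mul0r addr0 expr0.
rewrite exprSr.
have h1 : 0 <= 1 + x by lra.
apply: (le_trans _ (ler_wpM2r h1 IH)).
rewrite -natr1.
have : 0 <= n%:R * x ^+ 2 by rewrite mulr_ge0 ?sqr_ge0.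
rewrite expr2; nra.
Qed.

Lemma pow_le_inv (R : realFieldType) (q : R) n : 0 <= q <= 1 ->
  (1 - q) ^+ n <= (1 + n%:R * q)^-1.
Proof.
move=> /andP[q0 q1].
have hp : 0 < 1 + n%:R * q by rewrite ltr_pwDl ?mulr_ge0.
rewrite -(ler_pM2r hp) mulVf ?gt_eqF //.
apply: (le_trans (y := (1 - q) ^+ n * (1 + q) ^+ n)).
  apply: ler_wpM2l; first by rewrite exprn_ge0 // subr_ge0.
  apply: bern; lra.
rewrite -exprMn; apply: exprn_ile1.
  by rewrite mulr_ge0 //; lra.
nra.
Qed.

Lemma inv_cvg0 (R : realType) (F : set_system R) (FF : Filter F) (g : R -> R) :
  g @ F --> +oo -> (fun l => (1 + g l)^-1) @ F --> (0 : R).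
Proof.
move=> /cvgryPge gy; apply/cvgrPdist_lt => e e0.
have := gy (e^-1); apply: filterS => l hl.
have ei : 0 < e^-1 by rewrite invr_gt0.
have hp : 0 < 1 + g l by apply: (lt_le_trans (y := 1 + e^-1)); lra.
rewrite sub0r normrN gtr0_norm ?invr_gt0 //.
rewrite -(ltr_pM2r hp) mulVf ?gt_eqF //.
rewrite -(ltr_pM2l ei) mulrA mulVf ?gt_eqF // mul1r mulr1.
lra.
Qed.


Lemma range_conv (lo hi i : int) : lo <= hi ->
  (lo <= i <= hi) = (lo <= i < lo + ((`|hi - lo|%N).+1)%:Z).
Proof. move=> h; apply/idP/idP; lia. Qed.

Lemma count_bounds (R : realType) (a b M : R) : a < b -> 0 <= M ->
  Num.floor (a * M) <= Num.floor (b * M) /\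
  (b - a) * M <= ((`|Num.floor (b * M) - Num.floor (a * M)|%N).+1)%:R <= (b - a) * M + 2.
Proof.
move=> ab M0.
have le1 : a * M <= b * M by rewrite ler_wpM2r // ltW.
have hle : Num.floor (a * M) <= Num.floor (b * M) by apply: le_floor.
split => //.
rewrite -natr1 natr_absz ger0_norm ?subr_ge0 // intrB.
have := floor_le (a * M); have := floorD1_gt (a * M).
have := floor_le (b * M); have := floorD1_gt (b * M).
rewrite !intrD /=.
move: (Num.floor (a * M))%:~R (Num.floor (b * M))%:~R => x y.
rewrite mulrBl.
by move=> *; apply/andP; split; lra.
Qed.

Lemma ecvg_squeeze (R : realType) (F : set_system R) (FF : Filter F)
  (p : R -> \bar R) (lo hi : R -> R) (L : R) :
  (\forall l \near F, ((lo l)%:E <= p l <= (hi l)%:E)%E) ->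
  lo @ F --> L -> hi @ F --> L -> p @ F --> L%:E.
Proof.
move=> hb hlo hhi; apply/fine_cvgP; split.
  apply: filterS hb => l /andP[h1 h2].
  by rewrite fin_numElt (lt_le_trans _ h1) ?ltNyr // (le_lt_trans h2) ?ltry.
apply: (squeeze_cvgr _ hlo hhi); apply: filterS hb => l /andP[h1 h2] /=.
move: h1 h2; case: (p l) => [r| |] //=; rewrite !lee_fin => -> -> //.
Qed.


Lemma n_facts (R : realType) (u : R) : 0 < u <= 1 ->
  1 <= (Num.floor (1 / u))%:~R :> R /\ (Num.floor (1 / u))%:~R * u <= 1 /\
  1 / 2 <= (Num.floor (1 / u))%:~R * u.
Proof.
move=> /andP[u0 u1].
have hu : 1 <= 1 / u by rewrite ler_pdivlMr // mul1r.
have f1 : 1 <= Num.floor (1 / u) by rewrite floor_ge_int.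
have f1r : 1 <= (Num.floor (1 / u))%:~R :> R by rewrite ler1z.
have hle := floor_le (1 / u); have hgt := floorD1_gt (1 / u).
rewrite intrD in hgt.
move: hle hgt f1r; move: (Num.floor (1 / u))%:~R => n hle hgt f1r.
have e : 1 / u * u = 1 by rewrite mul1r mulVf ?gt_eqF.
split => //; split.
  by rewrite -e ler_pM2r.
have : (1 / u - 1) * u < n * u by rewrite ltr_pM2r //; lra.
rewrite mulrBl e mul1r => h.
have : u <= n * u by rewrite ler_peMl // ltW.
lra.
Qed.

Lemma tmpl_zero (R : realType) (F : set_system R) (FF : Filter F)
  (p : R -> \bar R) (q : R -> R) (c : R -> nat) :
  (\forall l \near F, (0 <= p l <= ((1 - q l) ^+ c l)%:E)%E /\ 0 <= q l <= 1) ->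
  (fun l => (c l)%:R * q l) @ F --> +oo -> p @ F --> 0%E.
Proof.
move=> hb hy.
apply: (@ecvg_squeeze _ _ _ _ (fun=> 0) (fun l => (1 + (c l)%:R * q l)^-1)).
- apply: filterS hb => l [/andP[h1 h2] hq]; rewrite h1 /=.
  by apply: (le_trans h2); rewrite lee_fin pow_le_inv.
- exact: cvg_cst.
- exact: inv_cvg0.
Qed.

Lemma tmpl_one (R : realType) (F : set_system R) (FF : Filter F)
  (p : R -> \bar R) (q : R -> R) (c : R -> nat) :
  (\forall l \near F, (((1 - q l) ^+ c l)%:E <= p l <= 1)%E /\ 0 <= q l <= 1) ->
  (fun l => (c l)%:R * q l) @ F --> (0 : R) -> p @ F --> 1%E.
Proof.
move=> hb h0.
apply: (@ecvg_squeeze _ _ _ _ (fun l => 1 - (c l)%:R * q l) (fun=> 1)).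
- apply: filterS hb => l [/andP[h1 h2] /andP[q0 q1]]; rewrite h2 andbT.
  apply: le_trans h1; rewrite lee_fin.
  have := @bern _ (- q l) (c l); rewrite mulrN; apply; lra.
- by rewrite -[X in _ --> X]subr0; apply: cvgB => //; exact: cvg_cst.
- exact: cvg_cst.
Qed.

Lemma tmpl_ex (R : realType) (F : set_system R) (FF : Filter F)
  (p : R -> \bar R) (q : R -> R) (c : R -> nat) :
  (\forall l \near F, ((1 - q l ^+ c l)%:E <= p l <= 1)%E /\ 0 <= q l <= 1 / 2) ->
  (fun l => (c l)%:R : R) @ F --> +oo -> p @ F --> 1%E.
Proof.
move=> hb hy.
apply: (@ecvg_squeeze _ _ _ _ (fun l => 1 - (1 + (c l)%:R / 2)^-1) (fun=> 1)).
- apply: filterS hb => l [/andP[h1 h2] /andP[q0 q1]]; rewrite h2 andbT.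
  apply: le_trans h1; rewrite lee_fin lerD2l lerN2.
  have hq : 0 <= 1 - q l <= 1 by apply/andP; split; lra.
  have := @pow_le_inv _ _ (c l) hq; rewrite opprB addrCA subrr addr0 => h.
  apply: (le_trans h); rewrite lef_pV2 ?posrE; last 2 first.
  + by rewrite ltr_pwDl // mulr_ge0 //; lra.
  + by rewrite ltr_pwDl // mulr_ge0 //; lra.
  rewrite lerD2l ler_wpM2l //; lra.
- rewrite -[X in _ --> X]subr0; apply: cvgB; first exact: cvg_cst.
  apply: inv_cvg0; apply/cvgryPge => A.
  move/cvgryPge: hy => /(_ (2 * A)); apply: filterS => l hl.
  rewrite ler_pdivlMr //; lra.
- exact: cvg_cst.
Qed.


Lemma near0 (R : realType) (e : R) : 0 < e -> \forall l \near (0 : R)^'+, 0 < l < e.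
Proof.
move=> e0; near=> l; apply/andP; split; near: l; [exact: nbhs_right_gt|].
exact: nbhs_right_lt.
Unshelve. all: by end_near.
Qed.

Lemma pos_eventually (R : realType) (G : R -> R)
  (Heq : (fun x => G x / G (1 * x)) @ +oo --> (1:R)) :
  exists x0, forall x, x0 <= x -> G x != 0.
Proof.
move/cvgrPdist_lt : Heq => /(_ (1/2)) [] // M [Mr HM].
exists (M + 1) => x hx; have /HM : M < x by lra.
rewrite mul1r; apply: contraTneq => ->; rewrite invr0 mulr0 subr0 normr1; lra.
Unshelve. all: by end_near.
Qed.

Lemma aL_infty (R : realType) (G aL : R -> R)
 (G0 : forall x, 0 <= G x) (Gmono : forall x y, x <= y -> G y <= G x)
 (aLdef : forall l, 0 < l <= 1 -> l * aL l = G (aL l))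
 (Heq : (fun x => G x / G (1 * x)) @ +oo --> (1:R)) :
 aL @ (0 : R)^'+ --> +oo.
Proof.
have [x0 hx0] := @pos_eventually _ _ Heq.
apply/cvgryPge => A.
pose M := Num.max (Num.max A x0) 1.
have M1 : 1 <= M by rewrite /M le_max lexx orbT.
have Mx0 : x0 <= M by rewrite /M !le_max lexx orbT.
have MA : A <= M by rewrite /M !le_max lexx.
have GM : 0 < G M by rewrite lt_def hx0 ?G0.
have e0 : 0 < Num.min 1 (G M / M) by rewrite lt_min ltr01 divr_gt0 //; lra.
near=> l.
have /andP[l0] : 0 < l < Num.min 1 (G M / M) by near: l; exact: near0.
rewrite lt_min => /andP[l1 lGM].
apply: (le_trans MA); rewrite leNgt; apply/negP => aLM.
have h1 := aLdef l; rewrite l0 ltW //= in h1; have := h1 erefl.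
have h2 : G M <= G (aL l) by apply: Gmono; exact: ltW.
have h3 : l * M < G M by rewrite -ltr_pdivlMr; lra.
have h4 : l * aL l < l * M by rewrite ltr_pM2l.
lra.
Unshelve. all: by end_near.
Qed.


Lemma basic_ev (R : realType) (G aL : R -> R)
 (G01 : forall x, 0 <= G x <= 1)
 (aLdef : forall l, 0 < l <= 1 -> l * aL l = G (aL l))
 (aLinf : aL @ (0 : R)^'+ --> +oo) :
 \forall l \near (0 : R)^'+, [/\ 0 < l <= 1, 0 < aL l, 0 < l * aL l <= 1,
   l * aL l = G (aL l) &
   [/\ (1 <= (Num.floor (1 / (l * aL l)))%:~R :> R),
   (Num.floor (1 / (l * aL l)))%:~R * (l * aL l) <= 1 &
   1 / 2 <= (Num.floor (1 / (l * aL l)))%:~R * (l * aL l)]].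
Proof.
near=> l.
have /andP[l0 l1] : 0 < l < 1 by near: l; exact: near0.
have a0 : 0 < aL l by near: l; move/cvgryPgt : aLinf; apply.
have ld : l * aL l = G (aL l) by apply: aLdef; rewrite l0 ltW.
have u01 : 0 < l * aL l <= 1.
  by rewrite mulr_gt0 //= ld; case/andP: (G01 (aL l)).
have [n1 [n2 n3]] := @n_facts _ _ u01.
by split => //; rewrite l0 ltW.
Unshelve. all: by end_near.
Qed.

Lemma part_i_real (R : realType) (G aL M : R -> R) (c : R -> nat) (a b t : R)
 (G01 : forall x, 0 <= G x <= 1)
 (Gmono : forall x y, x <= y -> G y <= G x)
 (aLinf : aL @ (0 : R)^'+ --> +oo) (ab : a < b) (t1 : t < 1)
 (Mnu : forall z, 0 <= z < 1 -> (fun l => M l * G (aL l * z)) @ (0 : R)^'+ --> +oo)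
 (hc : \forall l \near (0 : R)^'+, (b - a) * M l <= (c l)%:R) :
 (fun l => (c l)%:R * G (aL l * t)) @ (0 : R)^'+ --> +oo.
Proof.
pose z := Num.max t 0.
have z01 : 0 <= z < 1 by rewrite /z le_max lexx orbT /= gt_max t1 ltr01.
apply/cvgryPge => A.
have := Mnu z z01; move/cvgryPge => /(_ (A / (b - a))) hM.
near=> l.
have a0 : 0 < aL l by near: l; move/cvgryPgt: aLinf; apply.
have h1 : A / (b - a) <= M l * G (aL l * z) by near: l; exact: hM.
have h2 : (b - a) * M l <= (c l)%:R by near: l; exact: hc.
have h3 : G (aL l * z) <= G (aL l * t) by apply: Gmono; rewrite ler_pM2l // le_max lexx.
have ba : 0 < b - a by rewrite subr_gt0.
have h1' : A <= (b - a) * (M l * G (aL l * z)).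
  by rewrite -ler_pdivrMl // mulrC.
have g0 : 0 <= G (aL l * z) by case/andP: (G01 (aL l * z)).
have c0 : 0 <= (c l)%:R :> R by [].
apply: (le_trans h1'); rewrite mulrA.
apply: (le_trans (ler_wpM2r g0 h2)); exact: ler_wpM2l.
Unshelve. all: by end_near.
Qed.

Lemma ratio_comp (R : realType) (G aL : R -> R) (t : R) (L : R)
 (aLinf : aL @ (0 : R)^'+ --> +oo)
 (H : (fun x => G x / G (t * x)) @ +oo --> L) :
 (fun l => G (aL l) / G (t * aL l)) @ (0 : R)^'+ --> L.
Proof. exact: (cvg_comp _ _ aLinf H). Qed.

Lemma part_iii_real (R : realType) (G aL : R -> R) (c : R -> nat) (a b t : R)
 (G01 : forall x, 0 <= G x <= 1)
 (Gmono : forall x y, x <= y -> G y <= G x)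
 (aLdef : forall l, 0 < l <= 1 -> l * aL l = G (aL l))
 (aLinf : aL @ (0 : R)^'+ --> +oo) (ab : a < b) (t1 : t < 1)
 (HS_lt1 : forall t : R, 0 < t < 1 -> (fun x => G x / G (t * x)) @ +oo --> (0 : R))
 (hc : \forall l \near (0 : R)^'+,
    (b - a) * (Num.floor (1 / (l * aL l)))%:~R <= (c l)%:R) :
 (fun l => (c l)%:R * G (aL l * t)) @ (0 : R)^'+ --> +oo.
Proof.
pose z := Num.max t (1/2).
have z01 : 0 < z < 1.
  rewrite /z lt_max gt_max t1 /=; apply/andP; split; first (apply/orP; right); lra.
have ba : 0 < b - a by rewrite subr_gt0.
apply/cvgryPge => A.
pose B := Num.max (A / (b - a)) 1.
have B1 : 1 <= B by rewrite /B le_max lexx orbT.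
have BA : A / (b - a) <= B by rewrite /B le_max lexx.
have hr := @ratio_comp _ _ _ _ _ aLinf (HS_lt1 z z01).
have e0 : 0 < 1 / (2 * B) by rewrite divr_gt0 //; lra.
move/cvgrPdist_lt : hr => /(_ _ e0) hr.
have hb := @basic_ev _ _ _ G01 aLdef aLinf.
near=> l.
have /(_ _)[//|/andP[l0 l1] a0 /andP[u0 u1] ud [n1 n2 n3]] := near hb l.
have h2 : (b - a) * (Num.floor (1 / (l * aL l)))%:~R <= (c l)%:R by near: l; exact: hc.
have hrl : `|0 - G (aL l) / G (z * aL l)| < 1 / (2 * B) by near: l; exact: hr.
set N := (Num.floor (1 / (l * aL l)))%:~R in n1 n2 n3 h2 *.
have h3 : G (aL l * z) <= G (aL l * t) by apply: Gmono; rewrite ler_pM2l // le_max lexx.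
have h4 : G (aL l) <= G (aL l * z).
  by apply: Gmono; rewrite ger_pMr //; case/andP: z01 => _ /ltW.
rewrite -ud in h4.
have gz : 0 < G (aL l * z) by exact: lt_le_trans u0 h4.
rewrite sub0r normrN ger0_norm in hrl; last first.
  by rewrite divr_ge0 //; case/andP: (G01 (aL l)) => //; case/andP: (G01 (z * aL l)).
rewrite (mulrC z) in hrl.
have h5' : G (aL l) < 1 / (2 * B) * G (aL l * z).
  have -> : G (aL l) = G (aL l) / G (aL l * z) * G (aL l * z).
    by rewrite divfK // gt_eqF.
  by rewrite ltr_pM2r.
have h5 : 2 * B * (l * aL l) < G (aL l * z).
  have e2 : 2 * B * (1 / (2 * B) * G (aL l * z)) = G (aL l * z).
    by rewrite mulrA mul1r mulfV ?mul1r // gt_eqF //; lra.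
  by rewrite -[X in _ < X]e2 ltr_pM2l ?ud //; lra.
have h6 : B <= N * G (aL l * z).
  have : 2 * B * (N * (l * aL l)) <= N * G (aL l * z).
    by rewrite mulrCA; apply: ler_wpM2l; [lra|apply: ltW].
  nra.
have c0 : 0 <= (c l)%:R :> R by [].
have : A <= (b - a) * B by rewrite -ler_pdivrMl // mulrC.
have : (b - a) * (N * G (aL l * z)) <= (c l)%:R * G (aL l * t).
  rewrite mulrA; apply: (le_trans (ler_wpM2r (ltW gz) h2)); exact: ler_wpM2l.
nra.
Unshelve. all: by end_near.
Qed.

Lemma inv_cvgy0 (R : realType) (F : set_system R) (FF : Filter F) (g : R -> R) :
  g @ F --> +oo -> (fun l => (g l)^-1) @ F --> (0 : R).
Proof.
move=> /cvgryPge gy; apply/cvgrPdist_lt => e e0.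
have := gy (2 / e); apply: filterS => l hl.
have ei : 0 < 2 / e by rewrite divr_gt0.
have hp : 0 < g l by exact: lt_le_trans ei hl.
rewrite sub0r normrN gtr0_norm ?invr_gt0 //.
rewrite -(ltr_pM2r hp) mulVf ?gt_eqF //.
have : e * (2 / e) <= e * g l by rewrite ler_pM2l.
rewrite mulrCA mulfV ?gt_eqF // mulr1.
lra.
Qed.

Lemma part_ii_real (R : realType) (G aL M : R -> R) (c : R -> nat) (a b t : R)
 (G01 : forall x, 0 <= G x <= 1)
 (Gmono : forall x y, x <= y -> G y <= G x)
 (aLdef : forall l, 0 < l <= 1 -> l * aL l = G (aL l))
 (aLinf : aL @ (0 : R)^'+ --> +oo) (ab : a < b) (t1 : 1 <= t)
 (Minf : M @ (0 : R)^'+ --> +oo)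
 (Msmall : (fun l => M l / (Num.floor (1 / (l * aL l)))%:~R) @ (0 : R)^'+ --> (0 : R))
 (hc : \forall l \near (0 : R)^'+, (c l)%:R <= (b - a) * M l + 2) :
 (fun l => (c l)%:R * G (aL l * t)) @ (0 : R)^'+ --> (0 : R).
Proof.
have ba : 0 < b - a by rewrite subr_gt0.
apply: (@squeeze_cvgr _ _ _ _ (fun=> 0)
   (fun l => (b - a + 2) * (M l / (Num.floor (1 / (l * aL l)))%:~R))); last 2 first.
- exact: cvg_cst.
- rewrite -[X in _ --> X](mulr0 (b - a + 2)); exact: cvgMl_tmp.
have hb := @basic_ev _ _ _ G01 aLdef aLinf.
near=> l.
have /(_ _)[//|/andP[l0 l1] a0 /andP[u0 u1] ud [n1 n2 n3]] := near hb l.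
have h2 : (c l)%:R <= (b - a) * M l + 2 by near: l; exact: hc.
have M1 : 1 <= M l by near: l; move/cvgryPge : Minf; apply.
have q01 := G01 (aL l * t).
have hq : G (aL l * t) <= l * aL l by rewrite ud; apply: Gmono; rewrite ler_peMr // ltW.
set N := (Num.floor (1 / (l * aL l)))%:~R in n1 n2 n3 *.
have N0 : 0 < N by exact: lt_le_trans ltr01 n1.
have hu : l * aL l <= N^-1.
  by rewrite -(ler_pM2l N0) mulfV ?gt_eqF.
rewrite mulr_ge0 //=; last by case/andP: q01.
apply: (le_trans (ler_wpM2l (ler0n _ _) hq)).
apply: (le_trans (ler_wpM2r (ltW u0) h2)).
have : ((b - a) * M l + 2) <= (b - a + 2) * M l by nra.
move=> h3; apply: (le_trans (ler_wpM2r (ltW u0) h3)).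
rewrite -mulrA ler_wpM2l //; first lra.
rewrite ler_wpM2l //; lra.
Unshelve. all: by end_near.
Qed.

Lemma part_iv_real (R : realType) (G aL : R -> R) (c : R -> nat) (a b t : R)
 (G01 : forall x, 0 <= G x <= 1)
 (Gmono : forall x y, x <= y -> G y <= G x)
 (aLdef : forall l, 0 < l <= 1 -> l * aL l = G (aL l))
 (aLinf : aL @ (0 : R)^'+ --> +oo) (ab : a < b) (t1 : 1 < t)
 (HS_gt1 : (fun x => G x / G (t * x)) @ +oo --> +oo)
 (hc : \forall l \near (0 : R)^'+,
    (c l)%:R <= (b - a) * (Num.floor (1 / (l * aL l)))%:~R + 2) :
 (fun l => (c l)%:R * G (aL l * t)) @ (0 : R)^'+ --> (0 : R).
Proof.
have ba : 0 < b - a by rewrite subr_gt0.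
have hr : (fun l => G (aL l) / G (t * aL l)) @ (0 : R)^'+ --> +oo.
  exact: (cvg_comp _ _ aLinf HS_gt1).
have hr' := @inv_cvgy0 _ _ _ _ hr.
apply: (@squeeze_cvgr _ _ _ _ (fun=> 0)
   (fun l => (b - a + 2) * (G (aL l) / G (t * aL l))^-1)); last 2 first.
- exact: cvg_cst.
- rewrite -[X in _ --> X](mulr0 (b - a + 2)); exact: (cvgMl_tmp (hr' _)).
have hb := @basic_ev _ _ _ G01 aLdef aLinf.
near=> l.
have /(_ _)[//|/andP[l0 l1] a0 /andP[u0 u1] ud [n1 n2 n3]] := near hb l.
have h2 : (c l)%:R <= (b - a) * (Num.floor (1 / (l * aL l)))%:~R + 2.
  by near: l; exact: hc.
set N := (Num.floor (1 / (l * aL l)))%:~R in n1 n2 n3 h2 *.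
have q01 := G01 (aL l * t).
rewrite mulr_ge0 //=; last by case/andP: q01.
rewrite invf_div -ud (mulrC t).
have hq : G (aL l * t) = G (aL l * t) / (l * aL l) * (l * aL l).
  by rewrite divfK // gt_eqF.
have r0 : 0 <= G (aL l * t) / (l * aL l).
  by rewrite divr_ge0 //; [case/andP: q01|exact: ltW].
set r := G (aL l * t) / (l * aL l) in hq r0 *.
rewrite hq.
have h3 : (c l)%:R <= (b - a + 2) * N by nra.
have h4 : (c l)%:R * (r * (l * aL l)) <= (b - a + 2) * N * (r * (l * aL l)).
  by apply: ler_wpM2r => //; rewrite mulr_ge0 // ltW.
apply: (le_trans h4).
have h5 : r * (N * (l * aL l)) <= r * 1 by apply: ler_wpM2l.
rewrite -mulrA ler_wpM2l //; first lra.
by rewrite mulrCA -[X in _ <= X]mulr1.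
Unshelve. all: by end_near.
Qed.

Lemma part_v_real (R : realType) (G aL : R -> R) (t : R)
 (G01 : forall x, 0 <= G x <= 1)
 (Gmono : forall x y, x <= y -> G y <= G x)
 (aLinf : aL @ (0 : R)^'+ --> +oo) (t0 : 0 < t)
 (HS_lt1 : forall t : R, 0 < t < 1 -> (fun x => G x / G (t * x)) @ +oo --> (0 : R)) :
 \forall l \near (0 : R)^'+, G (aL l * t) <= 1 / 2.
Proof.
have hx : (fun l => aL l * t) @ (0 : R)^'+ --> +oo.
  apply/cvgryPge => A; move/cvgryPge : aLinf => /(_ (A / t)).
  apply: filterS => l hl; by rewrite -ler_pdivrMr.
have h12 : 0 < (1 / 2 : R) < 1 by apply/andP; split; lra.
have hr : (fun l => G (aL l * t) / G (1 / 2 * (aL l * t))) @ (0 : R)^'+ --> (0 : R).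
  exact: (cvg_comp _ _ hx (HS_lt1 _ h12)).
move/cvgrPdist_lt : hr => /(_ (1/2)) hr.
near=> l.
have x0 : 0 <= aL l * t by near: l; move/cvgryPge : hx; apply.
have hl : `|0 - G (aL l * t) / G (1 / 2 * (aL l * t))| < 1 / 2.
  by near: l; apply: hr; lra.
have hm : G (aL l * t) <= G (1 / 2 * (aL l * t)) by apply: Gmono; lra.
have g01 := G01 (1 / 2 * (aL l * t)).
have g01' := G01 (aL l * t).
case: (eqVneq (G (1 / 2 * (aL l * t))) 0) => [e|ne].
  by rewrite e in hm; lra.
have gp : 0 < G (1 / 2 * (aL l * t)).
  move: g01 => /andP[g0 _]; rewrite lt_def ne /=; exact: g0.
rewrite sub0r normrN ger0_norm in hl; last by apply: divr_ge0; [case/andP: g01'|exact: ltW].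
have : G (aL l * t) / G (1 / 2 * (aL l * t)) * G (1 / 2 * (aL l * t))
   <= 1 / 2 * G (1 / 2 * (aL l * t)) by rewrite ler_pM2r // ltW.
rewrite divfK ?gt_eqF // => h.
case/andP: g01 => _ g1; nra.
Unshelve. all: by end_near.
Qed.


Lemma G_props d (Omega : measurableType d) (R : realType)
  (P : probability Omega R) (muS : probability R R)
  (T1 : int -> Omega -> R) (X : int -> nat -> Omega -> R)
  (indep : mutually_independent P (SRfamily T1 X))
  (T1_law : forall (i : int) (A : set R), measurable A -> P (T1 i @^-1` A) = nu muS A) :
  (forall x : R, 0 <= fine (nu muS `]x, +oo[%classic) <= 1) /\
  (forall x y : R, x <= y -> fine (nu muS `]y, +oo[%classic) <= fine (nu muS `]x, +oo[%classic)).
Proof.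
have mT : forall x : R, measurable (T1 0 @^-1` `]x, +oo[%classic).
  by move=> x; rewrite -[X in measurable X]setTI;
    exact: (indep.1 (inl 0)) measurableT _ (measurable_itv _).
have fin : forall x : R, nu muS `]x, +oo[%classic = (fine (nu muS `]x, +oo[%classic))%:E.
  by move=> x; rewrite fineK // -(T1_law 0) // prob_fin.
split.
- move=> x.
  have h0 : (0 <= nu muS `]x, +oo[%classic)%E.
    by rewrite -(T1_law 0) //; exact: measure_ge0.
  have h1 : (nu muS `]x, +oo[%classic <= 1)%E.
    by rewrite -(T1_law 0) //; exact: probability_le1.
  by rewrite fin lee_fin in h0; rewrite fin lee_fin in h1; rewrite h0 h1.
- move=> x y xy; rewrite -lee_fin -!fin -!(T1_law 0) //.
  apply: le_measure; rewrite ?inE //.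
  by move=> w /=; rewrite !in_itv /= !andbT; apply: le_lt_trans.
Qed.

Lemma set_all_conv (T : Type) (E : int -> T -> Prop) (lo hi : int) : lo <= hi ->
  [set w | forall i, lo <= i <= hi -> E i w] =
  [set w | forall i, lo <= i < lo + ((`|hi - lo|%N).+1)%:Z -> E i w].
Proof.
move=> h; apply/seteqP; split => w /= H i.
- by rewrite -range_conv // => /H.
- by rewrite range_conv // => /H.
Qed.

Lemma set_ex_conv (T : Type) (E : int -> T -> Prop) (lo hi : int) : lo <= hi ->
  [set w | exists i, lo <= i <= hi /\ E i w] =
  [set w | exists i, lo <= i < lo + ((`|hi - lo|%N).+1)%:Z /\ E i w].
Proof.
move=> h; apply/seteqP; split => w /= [i [hi' H]]; exists i; split => //.
- by rewrite -range_conv.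
- by rewrite range_conv.
Qed.


Theorem mainTheorem10
  (R : realType) (d : measure_display) (Omega : measurableType d)
  (P : probability Omega R)
  (* the law mu_S, hypothesis (H_S(oo)) *)
  (muS : probability R R)
  (muS_pos : muS `]0%R, +oo[%classic = 1%E)
  (muS_unbounded : forall x : R, (0 < muS `]x, +oo[%classic)%E)
  (muS_mean : muS.-integrable setT (fun x : R => x%:E))
  (HS_lt1 : forall t : R, 0 < t < 1 ->
     (fun x : R => fine (nu muS `]x, +oo[%classic) / fine (nu muS `](t * x), +oo[%classic))
       @ +oo --> (0 : R))
  (HS_eq1 : (fun x : R => fine (nu muS `]x, +oo[%classic) / fine (nu muS `](1 * x), +oo[%classic))
       @ +oo --> (1 : R))
  (HS_gt1 : forall t : R, 1 < t ->
     (fun x : R => fine (nu muS `]x, +oo[%classic) / fine (nu muS `](t * x), +oo[%classic))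
       @ +oo --> +oo)
  (* a_lambda, n_lambda, m_lambda *)
  (aL : R -> R)
  (aL_def : forall l : R, 0 < l <= 1 -> l * aL l = fine (nu muS `](aL l), +oo[%classic))
  (mL : R -> nat)
  (mL_noninc : forall l l' : R, 0 < l -> l <= l' -> l' <= 1 -> (mL l' <= mL l)%N)
  (mL_infty : (fun l : R => (mL l)%:R : R) @ 0^'+ --> +oo)
  (mL_small : (fun l : R => (mL l)%:R / (Num.floor (1 / (l * aL l)))%:~R : R)
                @ 0^'+ --> (0 : R))
  (mL_nu : forall z : R, 0 <= z < 1 ->
     (fun l : R => (mL l)%:R * fine (nu muS `](aL l * z), +oo[%classic) : R) @ 0^'+ --> +oo)
  (* i.i.d. SR(mu_S) processes N^S(i), i in Z *)
  (T1 : int -> Omega -> R) (X : int -> nat -> Omega -> R)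
  (indep : mutually_independent P (SRfamily T1 X))
  (T1_law : forall (i : int) (A : set R), measurable A -> P (T1 i @^-1` A) = nu muS A)
  (X_law : forall (i : int) (k : nat) (A : set R), measurable A ->
             P (X i k @^-1` A) = muS A)
  (a b : R) (hab : a < b) :
  let nL := fun l : R => Num.floor (1 / (l * aL l)) in
  let N := Ncount T1 X in
  (* (i) *)
  (forall t : R, t < 1 ->
     (fun l : R => P [set w : Omega | forall i : int,
         Num.floor (a * (mL l)%:R) <= i <= Num.floor (b * (mL l)%:R) ->
         (0 < N i (aL l * t)%R w)%E]) @ 0^'+ --> 0%E) /\
  (* (ii) *)
  (forall t : R, 1 <= t ->
     (fun l : R => P [set w : Omega | forall i : int,
         Num.floor (a * (mL l)%:R) <= i <= Num.floor (b * (mL l)%:R) ->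
         (0 < N i (aL l * t)%R w)%E]) @ 0^'+ --> 1%E) /\
  (* (iii) *)
  (forall t : R, t < 1 ->
     (fun l : R => P [set w : Omega | forall i : int,
         Num.floor (a * (nL l)%:~R) <= i <= Num.floor (b * (nL l)%:~R) ->
         (0 < N i (aL l * t)%R w)%E]) @ 0^'+ --> 0%E) /\
  (* (iv) *)
  (forall t : R, 1 < t ->
     (fun l : R => P [set w : Omega | forall i : int,
         Num.floor (a * (nL l)%:~R) <= i <= Num.floor (b * (nL l)%:~R) ->
         (0 < N i (aL l * t)%R w)%E]) @ 0^'+ --> 1%E) /\
  (* (v) *)
  (forall t : R, 0 < t ->
     (fun l : R => P [set w : Omega | exists i : int,
         Num.floor (a * (mL l)%:R) <= i <= Num.floor (b * (mL l)%:R) /\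
         (0 < N i (aL l * t)%R w)%E]) @ 0^'+ --> 1%E).
Proof.
move=> nL N; subst nL N.
pose G := fun x : R => fine (nu muS `]x, +oo[%classic).
have [G01 Gmono] := @G_props _ _ _ P muS _ _ indep T1_law.
have G0 : forall x, 0 <= G x by move=> x; case/andP: (G01 x).
have aLdef' : forall l, 0 < l <= 1 -> l * aL l = G (aL l) := aL_def.
have aLinf : aL @ (0 : R)^'+ --> +oo := @aL_infty _ G aL G0 Gmono aLdef' HS_eq1.
pose cm l := (`|Num.floor (b * (mL l)%:R) - Num.floor (a * (mL l)%:R)|%N).+1.
pose nn l := (Num.floor (1 / (l * aL l)))%:~R : R.
pose cn l := (`|Num.floor (b * nn l) - Num.floor (a * nn l)|%N).+1.
have hb := @basic_ev _ _ _ G01 aLdef' aLinf.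
split; [|split; [|split; [|split]]].
-
  move=> t t1.
  apply: (@tmpl_zero _ _ _ _ (fun l => G (aL l * t)) cm).
    near=> l.
    have M0 : 0 <= (mL l)%:R :> R by [].
    have [hle _] := @count_bounds _ a b _ hab M0.
    rewrite (@set_all_conv _ (fun (i : int) (w : Omega) => (0 < Ncount T1 X i (aL l * t) w)%E) _ _ hle).
    split; last exact: G01.
    apply/andP; split; first exact: measure_ge0.
    exact: (@up_all _ _ _ P muS muS_pos _ _ indep T1_law X_law).
  apply: (@part_i_real _ G aL (fun l => (mL l)%:R) cm a b t G01 Gmono aLinf hab t1 mL_nu).
  near=> l.
  have M0 : 0 <= (mL l)%:R :> R by [].
  by have [_ /andP[h _]] := @count_bounds _ a b _ hab M0.
-
  move=> t t1.
  apply: (@tmpl_one _ _ _ _ (fun l => G (aL l * t)) cm).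
    near=> l.
    have M0 : 0 <= (mL l)%:R :> R by [].
    have [hle _] := @count_bounds _ a b _ hab M0.
    rewrite (@set_all_conv _ (fun (i : int) (w : Omega) => (0 < Ncount T1 X i (aL l * t) w)%E) _ _ hle).
    split; last exact: G01.
    apply/andP; split; first exact: (@low_all _ _ _ P muS _ _ indep T1_law).
    apply: probability_le1; exact: (@Sall_meas _ _ _ _ _ _ indep).
  apply: (@part_ii_real _ G aL (fun l => (mL l)%:R) cm a b t G01 Gmono aLdef' aLinf hab t1
    mL_infty mL_small).
  near=> l.
  have M0 : 0 <= (mL l)%:R :> R by [].
  by have [_ /andP[_ h]] := @count_bounds _ a b _ hab M0.
-
  move=> t t1.
  apply: (@tmpl_zero _ _ _ _ (fun l => G (aL l * t)) cn).
    near=> l.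
    have /(_ _)[//|_ _ _ _ [n1 _ _]] := near hb l.
    have M0 : 0 <= nn l by exact: le_trans ler01 n1.
    have [hle _] := @count_bounds _ a b _ hab M0.
    rewrite (@set_all_conv _ (fun (i : int) (w : Omega) => (0 < Ncount T1 X i (aL l * t) w)%E) _ _ hle).
    split; last exact: G01.
    apply/andP; split; first exact: measure_ge0.
    exact: (@up_all _ _ _ P muS muS_pos _ _ indep T1_law X_law).
  apply: (@part_iii_real _ G aL cn a b t G01 Gmono aLdef' aLinf hab t1 HS_lt1).
  near=> l.
  have /(_ _)[//|_ _ _ _ [n1 _ _]] := near hb l.
  have M0 : 0 <= nn l by exact: le_trans ler01 n1.
  by have [_ /andP[h _]] := @count_bounds _ a b _ hab M0.
-
  move=> t t1.
  apply: (@tmpl_one _ _ _ _ (fun l => G (aL l * t)) cn).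
    near=> l.
    have /(_ _)[//|_ _ _ _ [n1 _ _]] := near hb l.
    have M0 : 0 <= nn l by exact: le_trans ler01 n1.
    have [hle _] := @count_bounds _ a b _ hab M0.
    rewrite (@set_all_conv _ (fun (i : int) (w : Omega) => (0 < Ncount T1 X i (aL l * t) w)%E) _ _ hle).
    split; last exact: G01.
    apply/andP; split; first exact: (@low_all _ _ _ P muS _ _ indep T1_law).
    apply: probability_le1; exact: (@Sall_meas _ _ _ _ _ _ indep).
  apply: (@part_iv_real _ G aL cn a b t G01 Gmono aLdef' aLinf hab t1 (HS_gt1 t t1)).
  near=> l.
  have /(_ _)[//|_ _ _ _ [n1 _ _]] := near hb l.
  have M0 : 0 <= nn l by exact: le_trans ler01 n1.
  by have [_ /andP[_ h]] := @count_bounds _ a b _ hab M0.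
-
  move=> t t0.
  have hv := @part_v_real _ G aL t G01 Gmono aLinf t0 HS_lt1.
  apply: (@tmpl_ex _ _ _ _ (fun l => G (aL l * t)) cm).
    near=> l.
    have M0 : 0 <= (mL l)%:R :> R by [].
    have [hle _] := @count_bounds _ a b _ hab M0.
    rewrite (@set_ex_conv _ (fun (i : int) (w : Omega) => (0 < Ncount T1 X i (aL l * t) w)%E) _ _ hle).
    split.
      apply/andP; split; first exact: (@low_ex _ _ _ P muS _ _ indep T1_law).
      apply: probability_le1; exact: (@Sex_meas _ _ _ _ _ _ indep).
    apply/andP; split; first exact: G0.
    by near: l.
  apply/cvgryPge => A.
  have ba : 0 < b - a by rewrite subr_gt0.
  move/cvgryPge : mL_infty => /(_ (A / (b - a))) hM.
  near=> l.
  have M0 : 0 <= (mL l)%:R :> R by [].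
  have [_ /andP[h _]] := @count_bounds _ a b _ hab M0.
  have hl : A / (b - a) <= (mL l)%:R by near: l; exact: hM.
  apply: le_trans h; rewrite -ler_pdivrMl // mulrC //.
Unshelve. all: by end_near.
Qed.
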